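(* For each infinite cardinal $\kappa$ there is a crowded (i.e. without isolated points) regular space of size $2^\kappa$ which has a $\kappa$-deep $\pi$-base.
   Context: A $\pi$-base $\mathcal{U}$ of a space is $\kappa$-deep if for every decreasing sequence $\{U_\alpha\}_{\alpha<\kappa}\subseteq\mathcal{U}$ the set $\bigcap_{\alpha<\kappa}U_\alpha$ has nonempty interior. *)

(* Defs.v *)
From HB Require Import structures.
From mathcomp Require Import all_boot all_order.
From mathcomp Require Import all_classical all_reals topology.
Set Implicit Arguments. Unset Strict Implicit. Unset Printing Implicit Defensive.
Local Open Scope classical_set_scope.

(* An (initial) ordinal kappa, presented as a carrier type K with a strict
   well-order ltK of order type kappa. *)
Definition strict_well_order (K : Type) (ltK : K -> K -> Prop) : Prop :=
  [/\ (forall a, ~ ltK a a),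
      (forall a b c, ltK a b -> ltK b c -> ltK a c),
      (forall a b, ltK a b \/ a = b \/ ltK b a) &
      well_founded ltK].

Definition infinite_cardinal (K : Type) (ltK : K -> K -> Prop) : Prop :=
  [/\ strict_well_order ltK,
      (exists g : nat -> K, injective g) &
      (forall k : K, ~ exists g : K -> {j : K | ltK j k}, injective g)].

Definition crowded (T : topologicalType) : Prop :=
  forall x : T, ~ open [set x].

Definition regular_T3 (T : topologicalType) : Prop :=
  hausdorff_space T /\ regular_space T.

Definition pi_base (T : topologicalType) (U : set (set T)) : Prop :=
  (forall V, U V -> open V /\ V !=set0) /\
  (forall W : set T, open W -> W !=set0 -> exists2 V, U V & V `<=` W).

Definition deep (K : Type) (ltK : K -> K -> Prop) (T : topologicalType)
  (U : set (set T)) : Prop :=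
  forall V : K -> set T,
    (forall a, U (V a)) ->
    (forall a b, ltK a b -> V b `<=` V a) ->
    (interior (\bigcap_a V a)) !=set0.

(* Main.v *)
Require Import Defs.
From HB Require Import structures.
From mathcomp Require Import all_boot all_order.
From mathcomp Require Import all_classical all_reals topology.
Set Implicit Arguments. Unset Strict Implicit. Unset Printing Implicit Defensive.
Local Open Scope classical_set_scope.
Local Open Scope card_scope.

Lemma le_of_fun T U (A : set T) (B : set U) (f : T -> U) :
  (forall x, A x -> B (f x)) -> (forall x y, A x -> A y -> f x = f y -> x = y) -> A #<= B.
Proof.
move=> fAB finj.
have : $|{injfun A >-> B}|.
  apply/injfunPex; exists f; first by move=> x /fAB.
  by move=> x y /set_mem Ax /set_mem Ay; apply: finj.
by case=> g; exact: inj_card_le g.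
Qed.

Lemma fun_of_le T U (A : set T) (B : set U) :
  A #<= B -> forall (b0 : U), exists f : T -> U, (forall x, A x -> B (f x)) /\
   (forall x y, A x -> A y -> f x = f y -> x = y).
Proof.
move=> /card_leP [h] b0.
pose f x := match pselect (A x) with left hx => val (h (SigSub (mem_set hx))) | right _ => b0 end.
exists f; split.
  move=> x Ax; rewrite /f; case: pselect => // hx.
  exact: set_valP.
move=> x y Ax Ay; rewrite /f; case: pselect => // hx; case: pselect => // hy.
move=> /val_inj H.
have := @inj _ _ _ h _ _ (mem_set I) (mem_set I) H.
by move=> [].
Qed.

Lemma le_prod T U (A : set T) (B : set U) (b0 : U) :
  A #<= B -> A `*` A #<= B `*` B.
Proof.
move=> /fun_of_le /(_ b0) [f [fAB finj]].
apply: (@le_of_fun _ _ _ _ (fun p => (f p.1, f p.2))).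
  by move=> [x y] [/= Ax Ay]; split; apply: fAB.
move=> [x y] [x' y'] [/= Ax Ay] [/= Ax' Ay'] [E1 E2].
by rewrite (finj _ _ Ax Ax' E1) (finj _ _ Ay Ay' E2).
Qed.

Lemma hotel T (S : set T) (m : T) : ~ finite_set S -> ~ S m -> S `|` [set m] #<= S.
Proof.
move=> /infiniteP /fun_of_le /(_ m) [e [eS einj]] Sm.
have einj' : forall n n', e n = e n' -> n = n' by move=> n n'; apply: einj.
pose h x := match pselect (x = m) with
  | left _ => e 0%N
  | right _ => match pselect (exists n, e n = x) with
       | left H => e (proj1_sig (cid H)).+1
       | right _ => x end end.
apply: (@le_of_fun _ _ _ _ h).
  move=> x Sx; rewrite /h; case: pselect => [_|xm]; first exact: eS.
  case: pselect => [H|_]; first exact: eS.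
  by case: Sx => // ->.
move=> x y _ _; rewrite /h.
case: (pselect (x = m)) => [xm|xm]; case: (pselect (y = m)) => [ym|ym].
- by rewrite xm ym.
- case: (pselect (exists n, e n = y)) => [H|nH].
    by case: (cid H) => n /= _ /einj'.
  by move=> E; case: nH; exists 0%N.
- case: (pselect (exists n, e n = x)) => [H|nH].
    by case: (cid H) => n /= _ /einj'.
  by move=> E; case: nH; exists 0%N.
case: (pselect (exists n, e n = x)) => [H|nH];
  case: (pselect (exists n, e n = y)) => [H'|nH'].
- case: (cid H) => n /= <-; case: (cid H') => n' /= <-.
  by move=> /einj' [->].
- by case: (cid H) => n /= _ E; case: nH'; exists n.+1.
- by case: (cid H') => n /= _ E; case: nH; exists n.+1.
- by [].
Qed.

Lemma wf_lex2 (A B : Type) (RA : A -> A -> Prop) (RB : B -> B -> Prop) :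
  well_founded RA -> well_founded RB ->
  well_founded (fun x y : A * B => RA x.1 y.1 \/ (x.1 = y.1 /\ RB x.2 y.2)).
Proof.
move=> hA hB [a b]; elim/(well_founded_ind hA): a b => a IHa b.
elim/(well_founded_ind hB): b => b IHb.
constructor => -[a' b'] /= [H|[E H]]; first exact: IHa.
by subst a'; apply: IHb.
Qed.

Lemma wf_inv (A B : Type) (R : B -> B -> Prop) (f : A -> B) :
  well_founded R -> well_founded (fun x y => R (f x) (f y)).
Proof.
move=> hR x.
suff H : forall b, Acc R b -> forall x, f x = b -> Acc (fun x y => R (f x) (f y)) x.
  exact: (H _ (hR (f x))).
move=> b; elim => b' _ IH x' E.
by constructor => y Ry; apply: (IH (f y)) => //; rewrite -E.
Qed.

Section Hess.
Variables (K : Type) (ltK : K -> K -> Prop).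
Hypothesis swo : strict_well_order ltK.

Let irr : forall a, ~ ltK a a. Proof. by case: swo. Qed.
Let trn : forall a b c, ltK a b -> ltK b c -> ltK a c. Proof. by case: swo. Qed.
Let tri : forall a b, ltK a b \/ a = b \/ ltK b a. Proof. by case: swo. Qed.
Let wfK : well_founded ltK. Proof. by case: swo. Qed.

Definition leK a b := ltK a b \/ a = b.
Definition mx a b := if pselect (ltK a b) then b else a.

Lemma mx_l a b : leK a (mx a b).
Proof. by rewrite /mx; case: pselect => H; [left|right]. Qed.

Lemma mx_r a b : leK b (mx a b).
Proof.
rewrite /mx; case: pselect => H; first by right.
by case: (tri a b) => [//|[E|?]]; [right|left].
Qed.

Lemma mx_or a b : mx a b = a \/ mx a b = b.
Proof. by rewrite /mx; case: pselect; [right|left]. Qed.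

Lemma le_trans a b c : leK a b -> leK b c -> leK a c.
Proof.
move=> [ab|->] [bc|<-]; [left; exact: trn ab bc|left|left|right] => //.
Qed.

Definition lt2 (p q : K * K) :=
  ltK (mx p.1 p.2) (mx q.1 q.2) \/
  (mx p.1 p.2 = mx q.1 q.2 /\ (ltK p.1 q.1 \/ (p.1 = q.1 /\ ltK p.2 q.2))).

Lemma wf_lt2 : well_founded lt2.
Proof.
have W := wf_lex2 wfK (wf_lex2 wfK wfK).
have := wf_inv (fun p : K * K => (mx p.1 p.2, (p.1, p.2))) W.
by [].
Qed.

Lemma lt2_tot p q : p <> q -> lt2 p q \/ lt2 q p.
Proof.
move: p q => [a b] [c d] /= ne; rewrite /lt2 /=.
case: (tri (mx a b) (mx c d)) => [H|[E|H]]; [by left; left|idtac|by right; left].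
case: (tri a c) => [H'|[E1|H']].
- by left; right; split=> //; left.
- case: (tri b d) => [H'|[E2|H']].
  + by left; right; split=> //; right.
  + by case: ne; rewrite E1 E2.
  + by right; right; split => //; right.
- by right; right; split => //; left.
Qed.

Lemma lt2_bound q p : lt2 q p -> leK q.1 (mx p.1 p.2) /\ leK q.2 (mx p.1 p.2).
Proof.
move=> H.
have hm : leK (mx q.1 q.2) (mx p.1 p.2) by case: H => [H|[E _]]; [left|right].
by split; apply: le_trans hm; [exact: mx_l|exact: mx_r].
Qed.

Definition S (k : K) : set K := [set j | ltK j k].

Definition choose_in (k0 : K) (P : K -> Prop) : K :=
  match pselect (exists w, P w) with left H => proj1_sig (cid H) | right _ => k0 end.

Lemma choose_inP k0 (P : K -> Prop) : (exists w, P w) -> P (choose_in k0 P).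
Proof. by rewrite /choose_in; case: pselect => // H _; case: (cid H). Qed.

Local Open Scope card_scope.

Lemma hess (k0 : K) (W : set K) :
  ~ finite_set W -> (forall m, W m -> ~ (W #<= S m)) ->
  (forall m, W m -> ~ finite_set (S m) -> S m `*` S m #<= S m) ->
  W `*` W #<= W.
Proof.
move=> Winf Winit IH.
pose P p (rec : forall q, lt2 q p -> K) :=
  fun w => W w /\ forall q (h : lt2 q p), W q.1 -> W q.2 -> rec q h <> w.
pose F p rec := choose_in k0 (P p rec).
pose f := Fix wf_lt2 (fun _ => K) F.
have fE p : f p = F p (fun q _ => f q).
  apply: Fix_eq => x g1 g2 E; rewrite /F.
  have -> // : P x g1 = P x g2.
  apply/funext => w; apply/propext; rewrite /P.
  split => -[? H]; split => // q h; [rewrite -E|rewrite E]; exact: H.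
have key p : W p.1 -> W p.2 -> P p (fun q _ => f q) (f p).
  move=> W1 W2; rewrite fE /F; apply: choose_inP.
  apply: contrapT => nex.
  pose m := mx p.1 p.2.
  have Wm : W m by rewrite /m; case: (mx_or p.1 p.2) => ->.
  pose C := S m `|` [set m].
  have WC : W #<= C `*` C.
    apply: (@card_le_trans _ _ _ (f @` [set q | lt2 q p /\ W q.1 /\ W q.2])).
      apply: subset_card_le => w Ww.
      apply: contrapT => nim; apply: nex; exists w; split => // q h Wq1 Wq2 E.
      by apply: nim; exists q.
    apply: card_le_trans (card_image_le _ _) _.
    apply: subset_card_le => q [h _].
    by case: (lt2_bound h) => -[a|a] [b|b]; split; [left|left|left|right|right|left|right|right].
  case: (pselect (finite_set (S m))) => [fin|inf].
    apply: Winf; apply: (card_le_finite WC); apply: finite_setX;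
      by rewrite finite_setU; split => //; exact: finite_set1.
  have CS : C #<= S m by apply: hotel => //; exact: irr.
  apply: (Winit m Wm).
  apply: card_le_trans WC _.
  apply: card_le_trans (IH m Wm inf).
  exact: le_prod.
apply: (@le_of_fun _ _ _ _ f).
  by move=> p [W1 W2]; case: (key p W1 W2).
move=> p q [Wp1 Wp2] [Wq1 Wq2] E.
apply: contrapT => ne.
case: (lt2_tot ne) => h.
  by case: (key q Wq1 Wq2) => _ /(_ p h Wp1 Wp2); rewrite E.
by case: (key p Wp1 Wp2) => _ /(_ q h Wq1 Wq2); rewrite E.
Qed.

End Hess.

Local Open Scope card_scope.

Lemma seg_sq (K : Type) (ltK : K -> K -> Prop) (swo : strict_well_order ltK) k :
  ~ finite_set (S ltK k) -> S ltK k `*` S ltK k #<= S ltK k.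
Proof.
have [irr trn tri wfK] := swo.
elim/(well_founded_ind wfK): k => k IH inf.
have [k0 Sk0] := infinite_setN0 inf.
case: (pselect (exists j, ltK j k /\ S ltK k #<= S ltK j)) => [[j [jk le]]|nex].
  have infj : ~ finite_set (S ltK j).
    by move=> fj; apply: inf; exact: card_le_finite le fj.
  apply: card_le_trans (le_prod k0 le) _.
  apply: card_le_trans (IH j jk infj) _.
  by apply: subset_card_le => x xj; apply: trn xj jk.
apply: (@hess K ltK swo k0 (S ltK k) inf).
  by move=> m mk le; apply: nex; exists m.
by move=> m mk; apply: IH.
Qed.

Lemma KK_inj (K : Type) (ltK : K -> K -> Prop) (hK : infinite_cardinal ltK) :
  exists i : K * K -> K, injective i.
Proof.
have [swo [g ginj] hinit] := hK.
have le : [set: K] `*` [set: K] #<= [set: K].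
  apply: (@hess K ltK swo (g 0%N) [set: K]).
  - apply/infiniteP.
    by apply: (@le_of_fun _ _ _ _ g) => // x y _ _; apply: ginj.
  - move=> m _ /fun_of_le /(_ (g 0%N)) [h [hS hinj]].
    apply: (hinit m).
    exists (fun x => exist (fun j => ltK j m) (h x) (hS x I)).
    by move=> x y [] /hinj; apply.
  - by move=> m _; apply: seg_sq.
have [i [_ iinj]] := fun_of_le le (g 0%N).
by exists i => p q /iinj; apply.
Qed.

Definition Idx (K : Type) := K -> bool.
Definition cpred (K : Type) (y : Idx K -> bool) :=
  exists g : K -> Idx K, forall i, y i -> exists k, g k = i.
Definition Tc (K : Type) := {y : Idx K -> bool | cpred y}.
HB.instance Definition _ (K : Type) := gen_eqMixin (Tc K).
HB.instance Definition _ (K : Type) := gen_choiceMixin (Tc K).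

Definition small (K : Type) (D : set (Idx K)) :=
  exists g : nat -> K -> Idx K, forall i, D i -> exists n k, g n k = i.
Definition cyl (K : Type) (y : Tc K) (D : set (Idx K)) : set (Tc K) :=
  [set z | forall i, D i -> sval z i = sval y i].
Definition op (K : Type) : set_system (Tc K) :=
  [set W | forall y, W y -> exists D, small D /\ cyl y D `<=` W].

Lemma small0 K : small (@set0 (Idx K)).
Proof. by exists (fun _ _ _ => true). Qed.

Lemma smallU K (D1 D2 : set (Idx K)) : small D1 -> small D2 -> small (D1 `|` D2).
Proof.
move=> [g1 h1] [g2 h2].
exists (fun n => if odd n then g1 n./2 else g2 n./2) => i [/h1|/h2] [n [k E]].
  by exists n.*2.+1, k; rewrite /= odd_double /= uphalf_double.
by exists n.*2, k; rewrite odd_double doubleK.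
Qed.

Lemma small1 K (k0 : K) (i : Idx K) : small [set i].
Proof. by exists (fun _ _ => i) => j ->; exists 0%N, k0. Qed.

Lemma cyl_self K (y : Tc K) D : cyl y D y.
Proof. by []. Qed.

Lemma cyl_sub K (y : Tc K) D D' : D `<=` D' -> cyl y D' `<=` cyl y D.
Proof. by move=> DD z H i /DD; apply: H. Qed.

Lemma opT K : op [set: Tc K].
Proof. by move=> y _; exists set0; split => //; exact: small0. Qed.

Lemma opI K : setI_closed (@op K).
Proof.
move=> A B oA oB y [/oA [D1 [s1 c1]] /oB [D2 [s2 c2]]].
exists (D1 `|` D2); split; first exact: smallU.
move=> z zc; split; [apply: c1|apply: c2]; apply: cyl_sub zc => i; by [left|right].
Qed.

Lemma op_bigU K (I0 : Type) (f : I0 -> set (Tc K)) :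
  (forall i, op (f i)) -> op (\bigcup_i f i).
Proof.
move=> H y [i _ fiy]; have [D [sD cD]] := H i y fiy.
by exists D; split => // z /cD fz; exists i.
Qed.

HB.instance Definition _ (K : Type) := isOpenTopological.Build (Tc K) (@opT K) (@opI K) (@op_bigU K).

Lemma openE K : @open (Tc K) = @op K.
Proof. by []. Qed.


Lemma Tc_inj K (x y : Tc K) : sval x = sval y -> x = y.
Proof.
move: x y => [x px] [y py] /= E; subst y.
by congr exist; apply: Prop_irrelevance.
Qed.

Lemma cyl_open K (y : Tc K) D : small D -> open (cyl y D).
Proof.
move=> sD; rewrite openE => z zc; exists D; split => // w wc i Di.
by rewrite wc // zc.
Qed.

Lemma cylC_open K (y : Tc K) D : small D -> (forall i : Idx K, small [set i]) ->
  open (~` cyl y D).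
Proof.
move=> sD s1; rewrite openE => z zc.
have [i [Di ne]] : exists i, D i /\ sval z i <> sval y i.
  apply: contrapT => nex; apply: zc => i Di.
  by apply: contrapT => ne; apply: nex; exists i.
exists [set i]; split; first exact: s1.
by move=> w wc wcy; apply: ne; rewrite -(wc i erefl) wcy.
Qed.

Lemma Tc_hausdorff K (k0 : K) : hausdorff_space (Tc K).
Proof.
rewrite open_hausdorff => x y /eqP ne.
have [i ni] : exists i, sval x i <> sval y i.
  apply: contrapT => nex; apply: ne; apply: Tc_inj; apply/funext => i.
  by apply: contrapT => ne; apply: nex; exists i.
exists (cyl x [set i], cyl y [set i]); first by split; apply/mem_set.
split; [exact/cyl_open/small1|exact/cyl_open/small1|].
apply/eqP/seteqP; split => // z [/= h1 h2]; apply: ni.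
by rewrite -(h1 i erefl) -(h2 i erefl).
Qed.

Lemma Tc_regular K (k0 : K) : regular_space (Tc K).
Proof.
move=> a W [B [oB Ba BW]].
have [D [sD cD]] := oB a Ba.
exists (cyl a D).
  by exists (cyl a D); split => //; exact: cyl_open.
have cl : closed (cyl a D).
  rewrite -[cyl a D]setCK; apply: open_closedC; apply: cylC_open => //.
  exact: small1.
rewrite -((closure_id _).1 cl).
by move=> z /cD /BW.
Qed.

Definition Ufam (K : Type) : set (set (Tc K)) :=
  [set V | exists y D, small D /\ V = cyl y D].

Lemma Tc_pi_base (K : Type) : pi_base (@Ufam K).
Proof.
split.
  move=> V [y [D [sD ->]]]; split; [exact: cyl_open|by exists y].
move=> W oW [y Wy]; have [D [sD cD]] := oW y Wy.
by exists (cyl y D) => //; exists y, D.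
Qed.

Section WithPr.
Variables (K : Type) (pr : K -> K * K) (prS : forall p, exists m, pr m = p).
Variables (e : nat -> K) (einj : injective e).

Lemma Tc_crowded : crowded (Tc K).
Proof.
move=> x; rewrite openE => /(_ x erefl) [D [[g hg] cD]].
pose idx j := match pselect (exists n, e n = j) with
  | left H => proj1_sig (cid H) | right _ => 0%N end.
have idxE n : idx (e n) = n.
  rewrite /idx; case: pselect => [H|nH]; last by case: nH; exists n.
  by case: (cid H) => n' /= /einj.
pose i : Idx K := fun m => ~~ g (idx (pr m).1) (pr m).2 m.
have niD : ~ D i.
  move=> /hg [n [k E]]; have [m pm] := prS (e n, k).
  have := congr1 (fun f => f m) E; rewrite /i pm /= idxE.
  by case: (g n k m).
have [h hh] := svalP x.
pose zf : Idx K -> bool := fun j => if pselect (j = i) then ~~ sval x i else sval x j.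
have zp : cpred zf.
  exists (fun m => if pselect ((pr m).1 = e 0%N) then i else h (pr m).2).
  move=> j; rewrite /zf; case: pselect => [ji _|ji].
    have [m pm] := prS (e 0%N, e 0%N); exists m; rewrite pm /= ji.
    by case: pselect.
  move=> /hh [k hk]; have [m pm] := prS (e 1%N, k); exists m; rewrite pm /=.
  by case: pselect => [E|_] //; have := einj E.
pose z : Tc K := exist _ zf zp.
have : z = x.
  apply: cD => j Dj /=; rewrite /zf; case: pselect => // ji.
  by rewrite ji in Dj.
have zi : zf i = ~~ sval x i by rewrite /zf; case: pselect.
move=> /(congr1 (fun t => sval t i)) /=; rewrite zi.
by case: (sval x i).
Qed.

End WithPr.

Lemma Tc_deep (K : Type) (ltK : K -> K -> Prop) (swo : strict_well_order ltK)
  (pr : K -> K * K) (prS : forall p, exists m, pr m = p) : deep ltK (@Ufam K).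
Proof.
have [irr trn tri wfK] := swo.
move=> V HU hdec.
have [yD hyD] := choice (fun a => HU a).
pose y := yD.
pose D a := (proj1_sig (cid (hyD a))).
have hsD a : small (D a) /\ V a = cyl (y a) (D a).
  by rewrite /D /y; case: (cid (hyD a)).
have [g hg] := choice (fun a => (hsD a).1).
have [h hh] := choice (fun a => svalP (y a)).
have compat a b i : D a i -> D b i -> sval (y a) i = sval (y b) i.
  have gen a' b' : ltK a' b' -> D a' i -> sval (y a') i = sval (y b') i.
    move=> ab Da; have : V b' (y b') by rewrite (hsD b').2; exact: cyl_self.
    move=> /(hdec _ _ ab); rewrite (hsD a').2 => /(_ i Da) ->.
    by [].
  case: (tri a b) => [ab Da _|[-> //|ba _ Db]]; first exact: gen.
  by rewrite (gen _ _ ba Db).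
pose DD : set (Idx K) := [set i | exists a, D a i].
pose wf i := match pselect (exists a, D a i) with
  | left H => sval (y (proj1_sig (cid H))) i | right _ => false end.
have wfE a i : D a i -> wf i = sval (y a) i.
  move=> Dai; rewrite /wf; case: pselect => [H|nH]; last by case: nH; exists a.
  by case: (cid H) => b /= Dbi; apply: compat.
have wp : cpred wf.
  exists (fun m => h (pr m).1 (pr m).2) => i; rewrite /wf.
  case: pselect => // H; case: (cid H) => a /= _ /hh [k hk].
  by have [m pm] := prS (a, k); exists m; rewrite pm.
pose w : Tc K := exist _ wf wp.
have sDD : small DD.
  exists (fun n m => g (pr m).1 n (pr m).2) => i [a /hg [n [k E]]].
  by have [m pm] := prS (a, k); exists n, m; rewrite pm.
exists w; exists (cyl w DD); split => //; first exact: cyl_open.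
move=> z zc a _; rewrite (hsD a).2 => i Dai.
by rewrite (zc i (ex_intro _ a Dai)) /= (wfE a).
Qed.

Local Open Scope card_scope.

Lemma Tc_card (K : Type) (io : K * K -> K) (ioinj : injective io) (e0 e1 : K)
  (ne : e0 <> e1) : exists f : Tc K -> (K -> bool), bijective f.
Proof.
pose gy (y : Tc K) := proj1_sig (cid (svalP y)).
have gyP (y : Tc K) i : sval y i -> exists k, gy y k = i.
  by rewrite /gy; case: (cid (svalP y)) => g /= H /H.
pose psi (y : Tc K) : K -> bool := fun m =>
  `[< (exists k j, m = io (io (k, j), e0) /\ gy y k j) \/
      (exists k, m = io (k, e1) /\ sval y (gy y k)) >].
have psi1 y k j : psi y (io (io (k, j), e0)) = gy y k j.
  rewrite /psi; apply/idP/idP.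
    move/asboolP => [[k' [j' [/ioinj [/ioinj [-> ->]] //]]]|[k' [/ioinj [_ E]]]].
    by case: ne.
  by move=> H; apply/asboolP; left; exists k, j.
have psi2 y k : psi y (io (k, e1)) = sval y (gy y k).
  rewrite /psi; apply/idP/idP.
    move/asboolP => [[k' [j' [/ioinj [_ E]]]]|[k' [/ioinj [-> _] //]]].
    by case: ne.
  by move=> H; apply/asboolP; right; exists k.
have psiinj : injective psi.
  move=> y y' E.
  have Eg : gy y = gy y'.
    by apply/funext => k; apply/funext => j; rewrite -psi1 E psi1.
  apply: Tc_inj; apply/funext => i.
  case: (pselect (exists k, gy y k = i)) => [[k <-]|nk].
    by rewrite -psi2 E psi2 Eg.
  have -> : sval y i = false by apply/negP => /gyP.
  have -> // : sval y' i = false.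
  by apply/negP => /gyP [k Ek]; apply: nk; exists k; rewrite Eg.
have phip (x : K -> bool) : cpred (fun i => `[< i = x >]).
  by exists (fun _ => x) => i /asboolP ->; exists e0.
pose phi (x : K -> bool) : Tc K := exist _ _ (phip x).
have phiinj : injective phi.
  move=> x x' /(congr1 (fun t => sval t x)) /= E.
  have : `[< x = x >] by apply/asboolP.
  by rewrite E => /asboolP.
have : [set: Tc K] #= [set: K -> bool].
  apply: Cantor_Bernstein.
    by apply: (@le_of_fun _ _ _ _ psi) => // x y _ _ /psiinj.
  by apply: (@le_of_fun _ _ _ _ phi) => // x y _ _ /phiinj.
move=> /card_set_bijP [f hf]; exists f.
by rewrite -setTT_bijective.
Qed.

Theorem lemma4p1 (K : Type) (ltK : K -> K -> Prop)
  (hK : infinite_cardinal ltK) :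
  exists T : topologicalType,
    [/\ crowded T, regular_T3 T,
        (exists f : T -> (K -> bool), bijective f) &
        exists U : set (set T), pi_base U /\ deep ltK U].
Proof.
have [swo [e einj] _] := hK.
have [io ioinj] := KK_inj hK.
pose pr m := match pselect (exists p, io p = m) with
  | left H => proj1_sig (cid H) | right _ => (e 0%N, e 0%N) end.
have prS p : exists m, pr m = p.
  exists (io p); rewrite /pr; case: pselect => [H|nH]; last by case: nH; exists p.
  by case: (cid H) => q /= /ioinj.
exists (Tc K); split.
- exact: (@Tc_crowded K pr prS e einj).
- by split; [exact: Tc_hausdorff (e 0%N)|exact: Tc_regular (e 0%N)].
- apply: (Tc_card ioinj (e0 := e 0%N) (e1 := e 1%N)).
  by move=> /einj.
- exists (@Ufam K); split; [exact: Tc_pi_base|exact: (@Tc_deep K ltK swo pr prS)].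
Qed.
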